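(* For pairs of reals write $(a,b) \succeq (a',b')$ if $a \ge a'$ and $a+b \ge a'+b'$. Let $a,b,c,d,a',b',c',d'$ be nonnegative reals with $a' \ge b'$ and $c' \ge d'$. If $(a,b) \succeq (a',b')$ and $(c,d) \succeq (c',d')$, then $(ac,bd) \succeq (a'c',b'd')$. *)

(* Defs.v *)
From Stdlib Require Import Reals.
Open Scope R_scope.

Definition succeq (p q : R * R) : Prop :=
  fst p >= fst q /\ fst p + snd p >= fst q + snd q.

(* Main.v *)
Require Import Defs.
From Stdlib Require Import Reals Lra Psatz.
Open Scope R_scope.

Theorem lemma4p5 (a b c d a' b' c' d' : R)
  (ha : 0 <= a) (hb : 0 <= b) (hc : 0 <= c) (hd : 0 <= d)
  (ha' : 0 <= a') (hb' : 0 <= b') (hc' : 0 <= c') (hd' : 0 <= d')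
  (hab' : a' >= b') (hcd' : c' >= d')
  (h1 : succeq (a, b) (a', b')) (h2 : succeq (c, d) (c', d')) :
  succeq (a * c, b * d) (a' * c', b' * d').
Proof.
  unfold succeq in *; simpl in *. destruct h1 as [h1 h1']. destruct h2 as [h2 h2'].
  split.
  - nra.
  - destruct (Rle_dec d c) as [Hcd|Hcd].
    + assert (a*(c-d) >= a'*(c-d)) by nra.
      assert ((a+b)*d >= (a'+b')*d) by nra.
      assert ((a'-b')*c >= (a'-b')*c') by nra.
      assert (b'*(c+d) >= b'*(c'+d')) by nra.
      nra.
    + destruct (Rle_dec b a) as [Hba|Hba].
      * assert (c*(a-b) >= c'*(a-b)) by nra.
        assert ((c+d)*b >= (c'+d')*b) by nra.
        assert ((c'-d')*a >= (c'-d')*a') by nra.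
        assert (d'*(a+b) >= d'*(a'+b')) by nra.
        nra.
      * set (S := a'+b'). set (T := c'+d').
        destruct (Rle_dec a S); destruct (Rle_dec c T).
        -- assert (b*d >= (S-a)*(T-c)) by (apply Rle_ge; apply Rmult_le_compat; unfold S, T in *; lra).
           assert (a*c + (S-a)*(T-c) - (a'*c'+b'*d') = 2*(a-a')*(c-c') + (a-a')*(2*c'-T) + (c-c')*(2*a'-S) + 0) by (unfold S, T; ring).
           assert ((a-a')*(c-c') >= 0) by nra.
           assert ((a-a')*(2*c'-T) >= 0) by (unfold T; nra).
           assert ((c-c')*(2*a'-S) >= 0) by (unfold S; nra).
           nra.
        -- assert (a'*c'+b'*d' <= S*T) by (unfold S, T; nra).
           assert (a*c+b*d >= a*T + b*T - 0) by nra. nra.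
        -- assert (a'*c'+b'*d' <= S*T) by (unfold S, T; nra).
           assert (a*c+b*d >= S*c + S*d) by nra. nra.
        -- assert (a'*c'+b'*d' <= S*T) by (unfold S, T; nra).
           nra.
Qed.
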